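(* Let $\varphi:(0,\infty)\to\mathbb{R}$ be $\varphi(s)=\dfrac{s}{\sinh^2(\pi s)}$, and let $V:\mathbb{R}\setminus\{0\}\to\mathbb{R}$ be the even function given for $s>0$ by $$V(s)=\frac{1}{\pi}\,s\coth(\pi s)-\frac{1}{\pi^2}\log\bigl(2\sinh(\pi s)\bigr),$$ and by $V(-s)=V(s)$. For $t>0$ define $\varphi_{\mathrm{eff}}(t):=\sum_{k=1}^\infty k\,\varphi(kt)$. Then $$\lim_{t\to 0^+} t^2\,\varphi_{\mathrm{eff}}(t)=\frac12\int_{-\infty}^{\infty}V(s)\,ds,$$ i.e. $\varphi_{\mathrm{eff}}(t)\approx \dfrac{1}{2t^2}\displaystyle\int_{-\infty}^{\infty}V$ as $t\to0$.
   Context: On $(0,\infty)$, $V$ is the primitive of $-\varphi$ that decays to zero at infinity ($V'=-\varphi$). The function $\varphi$ is the interaction stress between two infinite walls of edge dislocations (with in-wall spacing normalized to $1$), $V$ is the corresponding interaction energy, and $\varphi_{\mathrm{eff}}$ is the effective stress summing the contributions of all $k$-th neighbours in an equispaced array of walls. *)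

(* Defs.v *)
From Stdlib Require Import Reals.
From Coquelicot Require Import Coquelicot.
Open Scope R_scope.

Definition phi (s : R) : R := s / (sinh (PI * s)) ^ 2.

Definition Vpos (s : R) : R :=
  / PI * s * (cosh (PI * s) / sinh (PI * s)) - / (PI ^ 2) * ln (2 * sinh (PI * s)).

(* even extension V(s) = V(|s|); the value at s = 0 is irrelevant (never used) *)
Definition V (s : R) : R := Vpos (Rabs s).

(* phi_eff(t) = sum_{k>=1} k phi(k t), reindexed from k = 0 as (k+1) *)
Definition phi_eff_term (t : R) (k : nat) : R := INR (S k) * phi (INR (S k) * t).
Definition phi_eff (t : R) : R := Series (phi_eff_term t).

(* Main.v *)
Require Import Defs.
From Stdlib Require Import Reals Lra Psatz.
From Coquelicot Require Import Coquelicot.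
Open Scope R_scope.

Lemma PI_gt3 : 3 < PI.
Proof. generalize PI2_3_2; lra. Qed.

Lemma mono_le (f df : R -> R) a b : a <= b ->
  (forall x, a <= x <= b -> is_derive f x (df x)) ->
  (forall x, a <= x <= b -> 0 <= df x) -> f a <= f b.
Proof.
  intros hab hd hp.
  destruct (MVT_gen f a b df) as [c [hc e]].
  - intros x hx. rewrite Rmin_left, Rmax_right in hx by lra. apply hd; lra.
  - intros x hx. rewrite Rmin_left, Rmax_right in hx by lra.
    apply continuity_pt_filterlim. apply (ex_derive_continuous (K:=R_AbsRing) (V:=R_NormedModule) f x).
    eexists; apply hd; lra.
  - rewrite Rmin_left, Rmax_right in hc by lra.
    assert (0 <= df c * (b - a)) by (apply Rmult_le_pos; [apply hp; lra| lra]). lra.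
Qed.

Lemma sinh_pos x : 0 < x -> 0 < sinh x.
Proof. intros. rewrite <- sinh_0. now apply sinh_lt. Qed.

Lemma sinh_nonneg x : 0 <= x -> 0 <= sinh x.
Proof. intros [h|h]. left; now apply sinh_pos. subst; rewrite sinh_0; lra. Qed.

Lemma cosh_ge1 x : 1 <= cosh x.
Proof.
  unfold cosh. rewrite exp_Ropp. set (y := exp x).
  assert (0 < y) by apply exp_pos.
  assert (y * / y = 1) by (field; lra).
  assert (0 < / y) by (apply Rinv_0_lt_compat; lra).
  assert (0 <= (y-1)^2 * / y) by (apply Rmult_le_pos; [apply pow2_ge_0|lra]).
  replace ((y-1)^2 * /y) with (y * (y * /y) - 2 * (y * / y) + /y) in H2 by ring.
  rewrite H0 in H2. lra.
Qed.

Lemma cosh_pos x : 0 < cosh x.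
Proof. generalize (cosh_ge1 x); lra. Qed.

Lemma d_sinh x : is_derive sinh x (cosh x).
Proof. unfold sinh, cosh. auto_derive. auto. field. Qed.
Lemma d_cosh x : is_derive cosh x (sinh x).
Proof. unfold sinh, cosh. auto_derive. auto. field. Qed.

Lemma cosh2_sinh2 x : cosh x ^ 2 - sinh x ^ 2 = 1.
Proof.
  unfold cosh, sinh. rewrite exp_Ropp.
  assert (0 < exp x) by apply exp_pos. field. lra.
Qed.

Ltac dsc := intros ? _; unfold sinh, cosh; auto_derive; [auto | field].

Lemma sinh_ge x : 0 <= x -> x <= sinh x.
Proof.
  intros hx.
  assert (H := mono_le (fun x => sinh x - x) (fun x => cosh x - 1) 0 x hx).
  simpl in H. rewrite sinh_0 in H.
  enough (0 - 0 <= sinh x - x) by lra. apply H.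
  - dsc.
  - intros y _. generalize (cosh_ge1 y); lra.
Qed.

Lemma sinh_le x : 0 <= x -> sinh x <= x * cosh x.
Proof.
  intros hx.
  assert (H := mono_le (fun x => x * cosh x - sinh x) (fun x => x * sinh x) 0 x hx).
  simpl in H. rewrite sinh_0 in H.
  enough (0 * cosh 0 - 0 <= x * cosh x - sinh x) by lra. apply H.
  - dsc.
  - intros y hy. apply Rmult_le_pos. lra. apply sinh_nonneg; lra.
Qed.

Lemma cosh_ge2 x : 0 <= x -> 1 + x^2/2 <= cosh x.
Proof.
  intros hx.
  assert (H := mono_le (fun x => cosh x - 1 - x^2/2) (fun x => sinh x - x) 0 x hx).
  simpl in H. rewrite cosh_0 in H.
  enough (1 - 1 - 0*(0*1)/2 <= cosh x - 1 - x*(x*1)/2) by (simpl; lra). apply H.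
  - dsc.
  - intros y hy. generalize (sinh_ge y); lra.
Qed.

Lemma sinh_ge3 x : 0 <= x -> x + x^3/6 <= sinh x.
Proof.
  intros hx.
  assert (H := mono_le (fun x => sinh x - x - x^3/6) (fun x => cosh x - 1 - x^2/2) 0 x hx).
  simpl in H. rewrite sinh_0 in H.
  enough (0 - 0 - 0*(0*(0*1))/6 <= sinh x - x - x*(x*(x*1))/6) by (simpl; lra). apply H.
  - dsc.
  - intros y hy. generalize (cosh_ge2 y); lra.
Qed.

Lemma ln_le_sub1 w : 0 < w -> ln w <= w - 1.
Proof.
  intros hw. rewrite <- (ln_exp (w - 1)). apply ln_le. auto.
  generalize (exp_ineq1_le (w - 1)); lra.
Qed.


Lemma sinhPI_pos s : 0 < s -> 0 < sinh (PI * s).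
Proof. intros. apply sinh_pos. generalize PI_RGT_0; nra. Qed.

Lemma Vpos_deriv x : 0 < x -> is_derive Vpos x (- phi x).
Proof.
  intros hx. generalize (sinhPI_pos x hx). unfold Vpos, phi.
  unfold sinh, cosh. intro hs.
  assert (hP := PI_RGT_0).
  auto_derive.
  - repeat split; try lra. 
  - rewrite !exp_Ropp. set (E := exp (PI*x)). assert (0 < E) by apply exp_pos. rewrite exp_Ropp in hs. fold E in hs.
    assert (E * / E = 1) by (field; lra).
    assert (E * E - 1 > 0) by nra.
    field. repeat split; lra.
Qed.

Definition g (s : R) : R := s * phi s.

Lemma g_eq s : 0 < s -> g s = (s / sinh (PI * s))^2.
Proof. intros h. generalize (sinhPI_pos s h). intros. unfold g, phi. field. lra. Qed.

Lemma g_pos s : 0 < s -> 0 < g s.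
Proof.
  intros h. rewrite g_eq by auto. generalize (sinhPI_pos s h); intro.
  apply pow_lt. apply Rdiv_lt_0_compat; lra.
Qed.

Lemma g_le s : 0 < s -> g s <= / PI ^ 2.
Proof.
  intros h. rewrite g_eq by auto. generalize (sinhPI_pos s h); intro.
  assert (hP := PI_RGT_0).
  assert (PI * s <= sinh (PI * s)) by (apply sinh_ge; nra).
  assert (s / sinh (PI * s) <= / PI).
  { apply (Rmult_le_reg_r (sinh (PI*s) * PI)). nra.
    field_simplify; try lra. }
  assert (0 <= s / sinh (PI * s)) by (apply Rlt_le, Rdiv_lt_0_compat; lra).
  replace (/ PI ^ 2) with (/PI * /PI) by (field; lra).
  simpl. rewrite Rmult_1_r. apply Rmult_le_compat; lra.
Qed.

Lemma g_tail s : 1 <= s -> g s <= / s ^ 2.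
Proof.
  intros h. rewrite g_eq by lra. generalize (sinhPI_pos s ltac:(lra)); intro.
  assert (hP := PI_gt3).
  assert ((PI*s) + (PI * s)^3/6 <= sinh (PI * s)) by (apply sinh_ge3; nra).
  assert (s * s <= sinh (PI * s)).
  { assert (27 * s^3 <= (PI*s)^3).
    { replace ((PI*s)^3) with (PI^3 * s^3) by ring.
      apply Rmult_le_compat_r. apply pow_le; lra.
      replace 27 with (3^3) by ring. apply pow_incr; lra. } nra. }
  assert (s / sinh (PI * s) <= / s).
  { apply (Rmult_le_reg_r (sinh (PI*s) * s)). nra.
    field_simplify; lra. }
  assert (0 <= s / sinh (PI * s)) by (apply Rlt_le, Rdiv_lt_0_compat; lra).
  replace (/ s ^ 2) with (/s * /s) by (field; lra).
  simpl. rewrite !Rmult_1_r. apply Rmult_le_compat; lra.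
Qed.

Lemma g_decr u v : 0 < u -> u <= v -> g v <= g u.
Proof.
  intros hu huv. rewrite !g_eq by lra.
  assert (hP := PI_RGT_0).
  assert (H := mono_le (fun s => sinh (PI * s) / s)
     (fun s => (PI * s * cosh (PI * s) - sinh (PI * s)) / s^2) u v huv).
  assert (hm : sinh (PI * u) / u <= sinh (PI * v) / v).
  { apply H.
    - intros x hx. unfold sinh, cosh. auto_derive. lra. field. lra.
    - intros x hx. apply Rdiv_le_0_compat. 2: apply pow_lt; lra.
      generalize (sinh_le (PI * x) ltac:(nra)). nra. }
  generalize (sinhPI_pos u hu) (sinhPI_pos v ltac:(lra)); intros h1 h2.
  assert (0 < sinh (PI * u) / u) by (apply Rdiv_lt_0_compat; lra).
  assert (e1 : u / sinh (PI * u) = / (sinh (PI * u) / u)) by (field; lra).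
  assert (e2 : v / sinh (PI * v) = / (sinh (PI * v) / v)) by (field; lra).
  rewrite e1, e2. apply pow_incr. split.
  apply Rlt_le, Rinv_0_lt_compat; lra.
  apply Rinv_le_contravar; lra.
Qed.

Lemma g_cont x : 0 < x -> continuous g x.
Proof.
  intros hx. apply (ex_derive_continuous (K:=R_AbsRing) (V:=R_NormedModule) g x).
  generalize (sinhPI_pos x hx). unfold g, phi, sinh. intro.
  auto_derive. apply Rgt_not_eq. unfold Rdiv in H. nra.
Qed.

Lemma Vpos_cont x : 0 < x -> continuous Vpos x.
Proof.
  intros hx. apply (ex_derive_continuous (K:=R_AbsRing) (V:=R_NormedModule) Vpos x).
  eexists. now apply Vpos_deriv.
Qed.


Lemma ex_RInt_g a b : 0 < a -> 0 < b -> ex_RInt g a b.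
Proof.
  intros ha hb. apply (ex_RInt_continuous (V:=R_CompleteNormedModule)). intros z hz.
  apply g_cont. assert (0 < Rmin a b) by (apply Rmin_glb_lt; auto). lra.
Qed.

Lemma RInt_g_nonneg a b : 0 < a -> a <= b -> 0 <= RInt g a b.
Proof.
  intros ha hab. apply RInt_ge_0; auto. apply ex_RInt_g; lra.
  intros x hx. apply Rlt_le, g_pos; lra.
Qed.

Lemma RInt_g_small a b : 0 < a -> a <= b -> RInt g a b <= (b - a) / PI ^ 2.
Proof.
  intros ha hab.
  assert (RInt g a b <= RInt (fun _ => / PI ^ 2) a b).
  { apply RInt_le; auto. apply ex_RInt_g; lra. apply ex_RInt_const.
    intros x hx. apply g_le; lra. }
  rewrite RInt_const in H. unfold scal in H; simpl in H. unfold mult in H; simpl in H.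
  unfold Rdiv. simpl. lra.
Qed.

Lemma RInt_inv2 a b : 0 < a -> 0 < b -> RInt (fun s => / s ^ 2) a b = / a - / b.
Proof.
  intros ha hb. apply is_RInt_unique.
  replace (/ a - / b) with (minus (- / b) (- / a)) by (unfold minus, plus, opp; simpl; ring).
  apply (is_RInt_derive (fun s => - / s)).
  - intros x hx. assert (0 < Rmin a b) by (apply Rmin_glb_lt; auto).
    auto_derive. lra. field. lra.
  - intros x hx. assert (0 < Rmin a b) by (apply Rmin_glb_lt; auto).
    apply (ex_derive_continuous (K:=R_AbsRing) (V:=R_NormedModule) (fun s => / s ^ 2) x).
    auto_derive. simpl. apply Rgt_not_eq. nra.
Qed.

Lemma RInt_g_tail a b : 1 <= a -> a <= b -> RInt g a b <= / a.
Proof.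
  intros ha hab.
  assert (RInt g a b <= RInt (fun s => / s ^ 2) a b).
  { apply RInt_le; auto. apply ex_RInt_g; lra.
    apply (ex_RInt_continuous (V:=R_CompleteNormedModule)). intros z hz. rewrite Rmin_left, Rmax_right in hz by lra.
    apply (ex_derive_continuous (K:=R_AbsRing) (V:=R_NormedModule) (fun s => / s ^ 2) z).
    auto_derive. simpl. apply Rgt_not_eq. nra.
    intros x hx. apply g_tail; lra. }
  rewrite RInt_inv2 in H by lra.
  assert (0 < / b) by (apply Rinv_0_lt_compat; lra). lra.
Qed.

Lemma RInt_g_abs_small a b d : 0 < a -> 0 < b -> a < d -> b < d ->
  Rabs (RInt g a b) <= d / PI ^ 2.
Proof.
  intros ha hb had hbd. assert (hP : 0 < PI ^ 2) by (apply pow_lt, PI_RGT_0).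
  destruct (Rle_lt_dec a b) as [h|h].
  - generalize (RInt_g_nonneg a b ha h) (RInt_g_small a b ha h). intros.
    rewrite Rabs_pos_eq by lra. unfold Rdiv in *.
    assert ((b - a) * / PI ^ 2 <= d * / PI ^ 2).
    { apply Rmult_le_compat_r. apply Rlt_le, Rinv_0_lt_compat; lra. lra. } lra.
  - generalize (RInt_g_nonneg b a hb (Rlt_le _ _ h)) (RInt_g_small b a hb (Rlt_le _ _ h)). intros.
    rewrite <- (opp_RInt_swap g b a) by (apply ex_RInt_g; lra).
    unfold opp; simpl. rewrite Rabs_Ropp.
    rewrite Rabs_pos_eq by lra. unfold Rdiv in *.
    assert ((a - b) * / PI ^ 2 <= d * / PI ^ 2).
    { apply Rmult_le_compat_r. apply Rlt_le, Rinv_0_lt_compat; lra. lra. } simpl in *. lra.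
Qed.

Lemma RInt_g_abs_tail a b M : 1 <= M -> M < a -> M < b -> Rabs (RInt g a b) <= / M.
Proof.
  intros hM ha hb.
  destruct (Rle_lt_dec a b) as [h|h].
  - generalize (RInt_g_nonneg a b ltac:(lra) h) (RInt_g_tail a b ltac:(lra) h). intros.
    rewrite Rabs_pos_eq by lra. assert (/ a <= / M) by (apply Rinv_le_contravar; lra). lra.
  - generalize (RInt_g_nonneg b a ltac:(lra) (Rlt_le _ _ h)) (RInt_g_tail b a ltac:(lra) (Rlt_le _ _ h)). intros.
    rewrite <- (opp_RInt_swap g b a) by (apply ex_RInt_g; lra).
    unfold opp; simpl. rewrite Rabs_Ropp.
    rewrite Rabs_pos_eq by lra. assert (/ b <= / M) by (apply Rinv_le_contravar; lra). lra.
Qed.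

Definition Fpr := filter_prod (at_right 0) (Rbar_locally p_infty).

Lemma Fpr_pos : Fpr (fun ab => 0 < fst ab /\ 0 < snd ab).
Proof.
  exists (fun a => 0 < a) (fun b => 0 < b).
  - exists (mkposreal 1 Rlt_0_1). intros y _ hy. exact hy.
  - exists 0. intros x hx. exact hx.
  - intros x y hx hy. simpl. auto.
Qed.

Lemma g_int_exists0 : exists J, filterlim (fun ab => RInt g (fst ab) (snd ab)) Fpr (locally J).
Proof.
  apply (filterlim_locally_cauchy (F := Fpr)).
  intros eps.
  assert (hP : 0 < PI ^ 2) by (apply pow_lt, PI_RGT_0).
  set (d := eps * PI ^ 2 / 3).
  assert (hd : 0 < d) by (unfold d; generalize (cond_pos eps); intro; unfold Rdiv; nra).
  set (M := 3 / eps + 1).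
  assert (hM : 1 < M) by (unfold M; generalize (cond_pos eps); intro;
     assert (0 < 3 / eps) by (apply Rdiv_lt_0_compat; lra); lra).
  exists (fun ab => 0 < fst ab < d /\ M < snd ab).
  split.
  - exists (fun a => 0 < a < d) (fun b => M < b).
    + exists (mkposreal d hd). intros y hy h0. change (Rabs (y - 0) < d) in hy.
      rewrite Rminus_0_r in hy. split; auto. apply Rabs_lt_between in hy; lra.
    + exists M. auto.
    + intros x y hx hy; simpl; auto.
  - intros [a b] [a' b'] [[ha1 ha2] hb] [[ha1' ha2'] hb']. simpl in *.
    change (Rabs (RInt g a' b' - RInt g a b) < eps).
    assert (e : RInt g a b = RInt g a a' + RInt g a' b' + RInt g b' b).
    { rewrite <- (RInt_Chasles g a a' b) by (apply ex_RInt_g; lra).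
      rewrite <- (RInt_Chasles g a' b' b) by (apply ex_RInt_g; lra).
      unfold plus; simpl. ring. }
    rewrite e.
    generalize (RInt_g_abs_small a a' d ha1 ha1' ha2 ha2')
               (RInt_g_abs_tail b' b M ltac:(lra) hb' hb). intros h1 h2.
    replace (RInt g a' b' - (RInt g a a' + RInt g a' b' + RInt g b' b))
      with (- (RInt g a a' + RInt g b' b)) by ring.
    rewrite Rabs_Ropp.
    eapply Rle_lt_trans. apply Rabs_triang.
    assert (d / PI ^ 2 = eps / 3) by (unfold d; field; apply PI_neq0).
    assert (/ M < eps / 3).
    { generalize (cond_pos eps); intro.
      assert (0 < 3 / eps) by (apply Rdiv_lt_0_compat; lra).
      replace (eps / 3) with (/ (3 / eps)) by (field; lra).
      apply Rinv_lt_contravar. nra. unfold M; lra. }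
    rewrite H in h1. generalize (cond_pos eps); intro. lra.
Qed.

Lemma g_int_exists : exists J : R, filterlim (fun ab => RInt g (fst ab) (snd ab)) Fpr (locally J).
Proof. destruct g_int_exists0 as [J HJ]. exists J. exact HJ. Qed.



Lemma near_J J : filterlim (fun ab => RInt g (fst ab) (snd ab)) Fpr (locally J) ->
  forall eps, 0 < eps -> exists d, 0 < d /\ exists B, forall a b, 0 < a < d -> B < b ->
    Rabs (RInt g a b - J) < eps.
Proof.
  intros H eps he.
  destruct (proj1 (filterlim_locally _ J) H (mkposreal eps he)) as [Q R hQ hR hQR].
  destruct hQ as [d hd]. destruct hR as [B hB].
  exists d. split. apply cond_pos. exists B. intros a b ha hb.
  apply (hQR a b). apply hd. change (Rabs (a - 0) < d). rewrite Rminus_0_r, Rabs_pos_eq; lra.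
  lra. now apply hB.
Qed.

Lemma le_J J : filterlim (fun ab => RInt g (fst ab) (snd ab)) Fpr (locally J) ->
  forall a b, 0 < a -> a <= b -> RInt g a b <= J.
Proof.
  intros H a b ha hab. apply Rle_plus_epsilon. intros eps he.
  destruct (near_J J H eps he) as [d [hd [B hB]]].
  set (a' := Rmin a (d/2)). set (b' := Rmax b (B + 1)).
  assert (h1 : 0 < a') by (apply Rmin_glb_lt; lra).
  assert (h2 : a' <= a) by apply Rmin_l.
  assert (h3 : a' < d) by (unfold a'; generalize (Rmin_r a (d/2)); lra).
  assert (h4 : b <= b') by apply Rmax_l.
  assert (h5 : B < b') by (unfold b'; generalize (Rmax_r b (B+1)); lra).
  generalize (hB a' b' (conj h1 h3) h5). intro hh.
  assert (e : RInt g a' b' = RInt g a' a + RInt g a b + RInt g b b').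
  { rewrite <- (RInt_Chasles g a' a b') by (apply ex_RInt_g; lra).
    rewrite <- (RInt_Chasles g a b b') by (apply ex_RInt_g; lra).
    unfold plus; simpl. ring. }
  generalize (RInt_g_nonneg a' a h1 h2) (RInt_g_nonneg b b' ltac:(lra) h4). intros.
  apply Rabs_lt_between in hh. lra.
Qed.

Lemma riem_step a h : 0 < a -> 0 < h ->
  h * g (a + h) <= RInt g a (a + h) <= h * g a.
Proof.
  intros ha hh. split.
  - assert (RInt (fun _ => g (a + h)) a (a + h) <= RInt g a (a + h)).
    { apply RInt_le. lra. apply ex_RInt_const. apply ex_RInt_g; lra.
      intros x hx. apply g_decr; lra. }
    rewrite RInt_const in H. unfold scal in H; simpl in H; unfold mult in H; simpl in H.
    replace (a + h - a) with h in H by ring. exact H.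
  - assert (RInt g a (a + h) <= RInt (fun _ => g a) a (a + h)).
    { apply RInt_le. lra. apply ex_RInt_g; lra. apply ex_RInt_const.
      intros x hx. apply g_decr; lra. }
    rewrite RInt_const in H. unfold scal in H; simpl in H; unfold mult in H; simpl in H.
    replace (a + h - a) with h in H by ring. exact H.
Qed.

Lemma term_eq t k : 0 < t -> t ^ 2 * phi_eff_term t k = t * g (INR (S k) * t).
Proof. intros. unfold phi_eff_term, g. ring. Qed.

Lemma term_nonneg t k : 0 < t -> 0 <= phi_eff_term t k.
Proof.
  intros ht. assert (0 < INR (S k)) by (apply lt_0_INR; lia).
  assert (0 < t ^ 2 * phi_eff_term t k).
  { rewrite term_eq by auto. apply Rmult_lt_0_compat; auto. apply g_pos. nra. }
  assert (0 < t ^ 2) by (apply pow_lt; auto). nra.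
Qed.

Lemma xS t n : INR (S (S n)) * t = INR (S n) * t + t.
Proof. rewrite (S_INR (S n)). ring. Qed.

Lemma psum_upper t N : 0 < t ->
  t ^ 2 * sum_n (phi_eff_term t) N <= t * g t + RInt g t (INR (S N) * t).
Proof.
  intros ht. induction N as [|N IH].
  - rewrite sum_O, term_eq by auto. simpl. rewrite Rmult_1_l.
    rewrite RInt_point. unfold zero; simpl. lra.
  - rewrite sum_Sn. unfold plus; simpl (AbelianMonoid.plus _ _ _).
    assert (hp : 0 < INR (S N) * t) by (apply Rmult_lt_0_compat; auto; apply lt_0_INR; lia).
    assert (e : t ^ 2 * (sum_n (phi_eff_term t) N + phi_eff_term t (S N)) =
      t ^ 2 * sum_n (phi_eff_term t) N + t ^ 2 * phi_eff_term t (S N)) by ring.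
    change (t ^ 2 * (sum_n (phi_eff_term t) N + phi_eff_term t (S N)) <=
      t * g t + RInt g t (INR (S (S N)) * t)).
    rewrite e, term_eq by auto. rewrite xS.
    rewrite <- (RInt_Chasles g t (INR (S N) * t)) by (apply ex_RInt_g; lra).
    generalize (riem_step (INR (S N) * t) t hp ht). intros.
    set (x := INR (S N) * t) in *. unfold plus; simpl. simpl in IH. lra.
Qed.

Lemma psum_lower t N : 0 < t ->
  RInt g t (INR (S (S N)) * t) <= t ^ 2 * sum_n (phi_eff_term t) N.
Proof.
  intros ht. induction N as [|N IH].
  - rewrite sum_O, term_eq by auto. rewrite xS. simpl (INR 1). rewrite Rmult_1_l.
    generalize (riem_step t t ht ht). intros. lra.
  - rewrite sum_Sn. unfold plus; simpl (AbelianMonoid.plus _ _ _).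
    assert (hp : 0 < INR (S (S N)) * t) by (apply Rmult_lt_0_compat; auto; apply lt_0_INR; lia).
    change (RInt g t (INR (S (S (S N))) * t) <=
      t ^ 2 * (sum_n (phi_eff_term t) N + phi_eff_term t (S N))).
    replace (t ^ 2 * (sum_n (phi_eff_term t) N + phi_eff_term t (S N))) with
      (t ^ 2 * sum_n (phi_eff_term t) N + t ^ 2 * phi_eff_term t (S N)) by ring.
    rewrite term_eq by auto. rewrite (xS t (S N)).
    assert (0 < INR (S N) * t) by (apply Rmult_lt_0_compat; auto; apply lt_0_INR; lia).
    rewrite <- (RInt_Chasles g t (INR (S (S N)) * t)) by (apply ex_RInt_g; lra).
    generalize (riem_step (INR (S (S N)) * t) t hp ht). intros.
    set (x := INR (S (S N)) * t) in *. unfold plus; simpl. simpl in IH. lra.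
Qed.



Lemma psum_bound (J : R) (HJ : filterlim (fun ab => RInt g (fst ab) (snd ab)) Fpr (locally J)) t N : 0 < t -> t ^ 2 * sum_n (phi_eff_term t) N <= t * g t + J.
Proof.
  intros ht. eapply Rle_trans. apply psum_upper; auto.
  apply Rplus_le_compat_l. apply le_J; auto.
  rewrite <- (Rmult_1_l t) at 1. apply Rmult_le_compat_r. lra.
  rewrite S_INR. generalize (pos_INR N). lra.
Qed.

Lemma psum_incr t N : 0 < t -> sum_n (phi_eff_term t) N <= sum_n (phi_eff_term t) (S N).
Proof.
  intros ht. rewrite sum_Sn. unfold plus; simpl. generalize (term_nonneg t (S N) ht). lra.
Qed.

Lemma exs (J : R) (HJ : filterlim (fun ab => RInt g (fst ab) (snd ab)) Fpr (locally J)) t : 0 < t -> ex_series (phi_eff_term t).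
Proof.
  intros ht. assert (h2 : 0 < t ^ 2) by (apply pow_lt; auto).
  destruct (ex_finite_lim_seq_incr (sum_n (phi_eff_term t)) ((t * g t + J) / t ^ 2)) as [l hl].
  - intros n. now apply psum_incr.
  - intros n. generalize (psum_bound J HJ t n ht). intro.
    apply (Rmult_le_reg_l (t ^ 2)); auto. replace (t ^ 2 * ((t * g t + J) / t ^ 2)) with
      (t * g t + J) by (field; lra). auto.
  - exists l. exact hl.
Qed.

Lemma bounds (J : R) (HJ : filterlim (fun ab => RInt g (fst ab) (snd ab)) Fpr (locally J)) t : 0 < t ->
  t ^ 2 * phi_eff t <= t * g t + J /\
  forall N, RInt g t (INR (S (S N)) * t) <= t ^ 2 * phi_eff t.
Proof.
  intros ht. assert (hs := Series_correct _ (exs J HJ t ht)).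
  assert (hl : is_lim_seq (sum_n (phi_eff_term t)) (phi_eff t)) by exact hs.
  assert (hl2 := is_lim_seq_scal_l _ (t ^ 2) _ hl). simpl in hl2.
  split.
  - assert (hh := is_lim_seq_le _ _ _ _ (fun N => psum_bound J HJ t N ht) hl2 (is_lim_seq_const _)).
    simpl in hh. exact hh.
  - intros N. eapply Rle_trans. apply psum_lower; auto.
    apply (is_lim_seq_incr_compare (fun N => t ^ 2 * sum_n (phi_eff_term t) N)); auto.
    intros n. apply Rmult_le_compat_l. apply pow_le; lra. now apply psum_incr.
Qed.

Lemma final_lim (J : R) (HJ : filterlim (fun ab => RInt g (fst ab) (snd ab)) Fpr (locally J)) : filterlim (fun t => t ^ 2 * phi_eff t) (at_right 0) (locally J).
Proof.
  apply (filterlim_locally (F := at_right 0)). intros eps.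
  assert (he : 0 < eps / 2) by (generalize (cond_pos eps); lra).
  destruct (near_J J HJ (eps / 2) he) as [d [hd [B hB]]].
  assert (hP : 0 < PI ^ 2) by (apply pow_lt, PI_RGT_0).
  assert (hd2 : 0 < Rmin d (eps / 2 * PI ^ 2)) by (apply Rmin_glb_lt; nra).
  exists (mkposreal _ hd2). intros t ht tpos.
  change (Rabs (t - 0) < Rmin d (eps / 2 * PI ^ 2)) in ht.
  rewrite Rminus_0_r, Rabs_pos_eq in ht by lra.
  assert (htd : t < d) by (generalize (Rmin_l d (eps / 2 * PI ^ 2)); lra).
  assert (hte : t < eps / 2 * PI ^ 2) by (generalize (Rmin_r d (eps / 2 * PI ^ 2)); lra).
  destruct (bounds J HJ t tpos) as [hu hlo].
  change (Rabs (t ^ 2 * phi_eff t - J) < eps).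
  destruct (INR_unbounded (B / t)) as [N hN].
  assert (hb : B < INR (S (S N)) * t).
  { assert (B < INR N * t).
    { apply (Rmult_lt_reg_r (/ t)). apply Rinv_0_lt_compat; auto.
      replace (INR N * t * / t) with (INR N) by (field; lra). unfold Rdiv in hN. lra. }
    rewrite !S_INR. nra. }
  generalize (hB t _ (conj tpos htd) hb) (hlo N). intros h1 h2.
  apply Rabs_lt_between in h1.
  assert (t * g t <= t * / PI ^ 2) by (apply Rmult_le_compat_l; [lra| apply g_le; auto]).
  assert (t * / PI ^ 2 < eps / 2).
  { apply (Rmult_lt_reg_r (PI ^ 2)); auto. rewrite Rmult_assoc, Rinv_l by lra. lra. }
  apply Rabs_def1; lra.
Qed.


Definition U (s : R) := s * Vpos s.

Lemma squeeze0 {T} (F : (T -> Prop) -> Prop) {FF : Filter F} (f B : T -> R) :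
  F (fun x => Rabs (f x) <= B x) -> filterlim B F (locally 0) -> filterlim f F (locally 0).
Proof.
  intros hb hB. apply filterlim_locally. intros eps.
  generalize (proj1 (filterlim_locally B 0) hB eps). intro h.
  generalize (filter_and _ _ hb h). apply filter_imp. intros x [h1 h2].
  change (Rabs (f x - 0) < eps). change (Rabs (B x - 0) < eps) in h2.
  rewrite Rminus_0_r in *. apply Rabs_lt_between in h2.
  generalize (Rabs_pos (f x)). lra.
Qed.

Lemma abs_ln_bound z : 0 < z -> z <= 2 -> Rabs (ln z) <= 2 / sqrt z + 1.
Proof.
  intros hz hz2. assert (hs : 0 < sqrt z) by (apply sqrt_lt_R0; auto).
  assert (0 < 2 / sqrt z) by (apply Rdiv_lt_0_compat; lra).
  destruct (Rle_lt_dec z 1) as [h|h].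
  - assert (ln z <= 0) by (rewrite <- ln_1; apply ln_le; lra).
    rewrite Rabs_left1 by auto.
    assert (e : ln z = 2 * ln (sqrt z)).
    { rewrite <- (sqrt_sqrt z) at 1 by lra. rewrite ln_mult by auto. ring. }
    assert (e2 : ln (sqrt z) = - ln (/ sqrt z)) by (rewrite ln_Rinv by auto; ring).
    generalize (ln_le_sub1 (/ sqrt z) (Rinv_0_lt_compat _ hs)). intro.
    unfold Rdiv. lra.
  - assert (0 <= ln z) by (rewrite <- ln_1; apply ln_le; lra).
    rewrite Rabs_pos_eq by auto. generalize (ln_le_sub1 z hz). lra.
Qed.

Lemma U_bound0 a : 0 < a -> a <= / PI -> Rabs (U a) <= 4 * a + 2 * sqrt a.
Proof.
  intros ha hapi.
  assert (hP := PI_gt3). set (x := PI * a).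
  assert (hx : 0 < x) by (unfold x; nra).
  assert (hx1 : x <= 1).
  { unfold x. apply (Rmult_le_compat_l PI) in hapi; try lra.
    rewrite Rinv_r in hapi by lra. lra. }
  assert (hs := sinhPI_pos a ha). fold x in hs.
  assert (hsg : x <= sinh x) by (apply sinh_ge; lra).
  assert (hsl : sinh x <= x * cosh x) by (apply sinh_le; lra).
  assert (hc1 : 1 <= cosh x) by apply cosh_ge1.
  assert (hc3 : cosh x <= 3).
  { unfold cosh. rewrite exp_Ropp.
    assert (exp x <= exp 1) by (destruct hx1 as [h|h]; [left; apply exp_increasing; auto| rewrite h; lra]).
    assert (1 <= exp x) by (generalize (exp_ineq1_le x); lra).
    assert (/ exp x <= 1) by (rewrite <- Rinv_1; apply Rinv_le_contravar; lra).
    generalize exp_le_3. lra. }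
  unfold U, Vpos. fold x.
  set (T1 := / PI * a * (cosh x / sinh x)).
  assert (hT1a : 0 <= T1).
  { unfold T1. apply Rmult_le_pos. apply Rmult_le_pos. apply Rlt_le, Rinv_0_lt_compat; lra. lra.
    apply Rdiv_le_0_compat; lra. }
  assert (hT1b : T1 <= 1).
  { unfold T1. replace (/ PI * a * (cosh x / sinh x)) with (a * cosh x / (PI * sinh x))
      by (field; split; lra).
    apply (Rmult_le_reg_r (PI * sinh x)). apply Rmult_lt_0_compat; nra.
    unfold Rdiv. rewrite Rmult_assoc, Rinv_l by (apply Rgt_not_eq; apply Rmult_lt_0_compat; nra).
    assert (ex : x = PI * a) by reflexivity. assert (a * cosh x <= a * 3) by (apply Rmult_le_compat_l; lra). assert (PI * x <= PI * sinh x) by (apply Rmult_le_compat_l; lra). rewrite ex in H0. nra. }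
  set (L := ln (2 * sinh x)).
  assert (hL1 : ln (2 * x) <= L) by (apply ln_le; lra).
  assert (hL2 : L <= ln (2 * x) + 2).
  { unfold L. assert (2 * sinh x <= 3 * (2 * x)) by nra.
    eapply Rle_trans. apply ln_le. lra. apply H.
    rewrite ln_mult by lra. generalize (ln_le_sub1 3 ltac:(lra)). lra. }
  assert (hz := abs_ln_bound (2 * x) ltac:(lra) ltac:(lra)).
  assert (hLa : Rabs L <= 2 / sqrt (2 * x) + 3).
  { generalize (Rle_abs (ln (2*x))) (Rabs_maj2 (ln (2*x))). intros. apply Rabs_le. lra. }
  assert (hsq : a * (2 / sqrt (2 * x)) <= 2 * sqrt a).
  { assert (hsa : 0 < sqrt a) by (apply sqrt_lt_R0; auto).
    assert (e : sqrt (2 * x) = sqrt (2 * PI) * sqrt a).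
    { unfold x. rewrite <- sqrt_mult by nra. f_equal; ring. }
    assert (h1 : 1 <= sqrt (2 * PI)).
    { rewrite <- sqrt_1. apply sqrt_le_1_alt. lra. }
    rewrite e. rewrite <- (sqrt_sqrt a) at 1 by lra.
    replace (sqrt a * sqrt a * (2 / (sqrt (2 * PI) * sqrt a))) with (2 * sqrt a / sqrt (2 * PI))
      by (field; lra).
    apply (Rmult_le_reg_r (sqrt (2 * PI))). lra.
    unfold Rdiv. rewrite Rmult_assoc, Rinv_l by lra. nra. }
  replace (a * (T1 - / PI ^ 2 * L)) with (a * T1 - (a * / PI ^ 2) * L) by ring.
  eapply Rle_trans. apply Rabs_triang. rewrite Rabs_Ropp.
  rewrite Rabs_mult, Rabs_mult, (Rabs_pos_eq a), (Rabs_pos_eq T1) by lra.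
  assert (hp2 : 0 < / PI ^ 2) by (apply Rinv_0_lt_compat, pow_lt; lra).
  assert (hp3 : / PI ^ 2 <= 1).
  { rewrite <- Rinv_1. apply Rinv_le_contravar. lra. simpl. nra. }
  rewrite Rabs_pos_eq by nra.
  assert (a * / PI ^ 2 * Rabs L <= a * Rabs L).
  { apply Rmult_le_compat_r. apply Rabs_pos. nra. }
  assert (a * Rabs L <= a * (2 / sqrt (2 * x) + 3)) by (apply Rmult_le_compat_l; lra).
  nra.
Qed.

Lemma U_bound_inf b : 1 <= b -> Rabs (U b) <= 2 / b.
Proof.
  intros hb. assert (hP := PI_gt3).
  set (x := PI * b). assert (hx : 3 <= x) by (unfold x; nra).
  set (E := exp x).
  assert (hE1 : 1 + x <= E) by apply exp_ineq1_le.
  assert (hE3 : x + x ^ 3 / 6 <= E).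
  { assert (sinh x <= E).
    { unfold sinh. fold E. rewrite exp_Ropp. fold E.
      assert (0 < / E) by (apply Rinv_0_lt_compat; lra). lra. }
    generalize (sinh_ge3 x ltac:(lra)). lra. }
  set (y := / E ^ 2).
  assert (hy0 : 0 < y) by (apply Rinv_0_lt_compat, pow_lt; lra).
  assert (hy1 : y <= / 16).
  { apply Rinv_le_contravar. lra. simpl. nra. }
  assert (hE0 : 0 < E) by lra.
  assert (hsh : sinh x = E * (1 - y) / 2).
  { unfold sinh, y. fold E. rewrite exp_Ropp. fold E. field. lra. }
  assert (hch : cosh x = E * (1 + y) / 2).
  { unfold cosh, y. fold E. rewrite exp_Ropp. fold E. field. lra. }
  assert (hln : ln (2 * sinh x) = x + ln (1 - y)).
  { rewrite hsh. replace (2 * (E * (1 - y) / 2)) with (E * (1 - y)) by field.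
    rewrite ln_mult by lra. unfold E. rewrite ln_exp. auto. }
  assert (hV : Vpos b = b / PI * (2 * y / (1 - y)) - ln (1 - y) / PI ^ 2).
  { unfold Vpos. fold x. rewrite hln, hsh, hch. unfold x. field. repeat split; lra. }
  assert (hl1 : ln (1 - y) <= 0) by (rewrite <- ln_1; apply ln_le; lra).
  assert (hl2 : - ln (1 - y) <= 2 * y).
  { rewrite <- ln_Rinv by lra. eapply Rle_trans. apply ln_le_sub1.
    apply Rinv_0_lt_compat; lra.
    replace (/ (1 - y) - 1) with (y / (1 - y)) by (field; lra).
    apply (Rmult_le_reg_r (1 - y)). lra. unfold Rdiv.
    rewrite Rmult_assoc, Rinv_l by lra. nra. }
  assert (hq1 : 0 <= 2 * y / (1 - y) <= 4 * y).
  { split. apply Rdiv_le_0_compat; lra.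
    apply (Rmult_le_reg_r (1 - y)). lra. unfold Rdiv.
    rewrite Rmult_assoc, Rinv_l by lra. nra. }
  assert (hp2 : 0 < / PI ^ 2 <= 1).
  { split. apply Rinv_0_lt_compat, pow_lt; lra.
    rewrite <- Rinv_1. apply Rinv_le_contravar. lra. simpl. nra. }
  assert (hp1 : 0 < / PI <= 1).
  { split. apply Rinv_0_lt_compat; lra. rewrite <- Rinv_1. apply Rinv_le_contravar; lra. }
  assert (hVb : Rabs (Vpos b) <= 6 * b * y).
  { rewrite hV. unfold Rdiv. apply Rabs_le. split.
    - assert (0 <= b * / PI * (2 * y * / (1 - y))).
      { apply Rmult_le_pos. nra. unfold Rdiv in hq1; lra. }
      assert (- ln (1 - y) * / PI ^ 2 <= 2 * y).
      { assert (0 <= - ln (1 - y)) by lra. nra. }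
      nra.
    - assert (b * / PI * (2 * y * / (1 - y)) <= b * (4 * y)).
      { unfold Rdiv in hq1. assert (0 <= b * / PI <= b) by nra. nra. }
      assert (0 <= - ln (1 - y) * / PI ^ 2 <= 2 * y).
      { assert (0 <= - ln (1 - y)) by lra. split. nra. nra. }
      nra. }
  unfold U. rewrite Rabs_mult, Rabs_pos_eq by lra.
  assert (hyb : y <= / (4 * b ^ 3)).
  { unfold y. apply Rinv_le_contravar. simpl; nra.
    assert (27 * b ^ 3 <= x ^ 3).
    { unfold x. replace ((PI * b) ^ 3) with (PI ^ 3 * b ^ 3) by ring.
      apply Rmult_le_compat_r. apply pow_le; lra.
      replace 27 with (3 ^ 3) by ring. apply pow_incr; lra. }
    assert (0 <= b ^ 3) by (apply pow_le; lra).
    simpl. nra. }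
  assert (b * Rabs (Vpos b) <= b * (6 * b * y)) by (apply Rmult_le_compat_l; lra).
  assert (b * (6 * b * y) <= b * (6 * b * / (4 * b ^ 3))).
  { apply Rmult_le_compat_l. lra. apply Rmult_le_compat_l; nra. }
  replace (b * (6 * b * / (4 * b ^ 3))) with (3 / 2 / b) in H0 by (field; lra).
  assert (3 / 2 / b <= 2 / b).
  { unfold Rdiv. apply Rmult_le_compat_r. apply Rlt_le, Rinv_0_lt_compat; lra. lra. }
  lra.
Qed.

Lemma U_lim0 : filterlim U (at_right 0) (locally 0).
Proof.
  apply (squeeze0 _ U (fun a => 4 * a + 2 * sqrt a)).
  - assert (hp : 0 < / PI) by (apply Rinv_0_lt_compat, PI_RGT_0).
    exists (mkposreal _ hp). intros y hy hy0.
    change (Rabs (y - 0) < / PI) in hy. rewrite Rminus_0_r, Rabs_pos_eq in hy by lra.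
    apply U_bound0; lra.
  - apply (filterlim_filter_le_1 (F := locally 0)). apply filter_le_within.
    replace 0 with (4 * 0 + 2 * sqrt 0) at 2 by (rewrite sqrt_0; ring).
    apply (continuous_plus (fun a => 4 * a) (fun a => 2 * sqrt a)).
    + apply (continuous_mult (fun _ => 4) (fun a => a)). apply continuous_const. apply continuous_id.
    + apply (continuous_mult (fun _ => 2) sqrt). apply continuous_const. apply continuous_sqrt.
Qed.

Lemma U_liminf : filterlim U (Rbar_locally p_infty) (locally 0).
Proof.
  apply (squeeze0 _ U (fun b => 2 / b)).
  - exists 1. intros x hx. apply U_bound_inf; lra.
  - apply filterlim_locally. intros eps. exists (2 / eps + 1). intros x hx.
    assert (he := cond_pos eps).
    assert (0 < 2 / eps) by (apply Rdiv_lt_0_compat; lra).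
    change (Rabs (2 / x - 0) < eps). rewrite Rminus_0_r.
    rewrite Rabs_pos_eq by (apply Rlt_le, Rdiv_lt_0_compat; lra).
    apply (Rmult_lt_reg_r x). lra. unfold Rdiv. rewrite Rmult_assoc, Rinv_l by lra.
    assert (2 = 2 / eps * eps) by (field; lra).
    nra.
Qed.

Lemma U_deriv x : 0 < x -> is_derive U x (Vpos x - g x).
Proof.
  intros hx. unfold U.
  evar (d : R). replace (Vpos x - g x) with d.
  apply (is_derive_mult (fun s => s) Vpos). apply is_derive_id. apply Vpos_deriv; auto.
  intros; apply Rmult_comm.
  unfold d, g. unfold plus, mult, one; simpl. ring.
Qed.

Lemma is_RInt_V a b : 0 < a -> 0 < b -> is_RInt V a b (U b - U a + RInt g a b).
Proof.
  intros ha hb. assert (hm : 0 < Rmin a b) by (apply Rmin_glb_lt; auto).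
  apply (is_RInt_ext (fun s => plus (Vpos s - g s) (g s))).
  - intros x hx. unfold V. rewrite Rabs_pos_eq by lra. unfold plus; simpl. ring.
  - apply (is_RInt_plus (V := R_NormedModule)).
    + apply (is_RInt_derive (V := R_CompleteNormedModule) U).
      * intros x hx. apply U_deriv. lra.
      * intros x hx. apply (continuous_plus (V := R_NormedModule) Vpos (fun s => - g s)).
        apply Vpos_cont; lra.
        apply (continuous_opp (V := R_NormedModule) g). apply g_cont; lra.
    + apply (RInt_correct (V := R_CompleteNormedModule)). apply ex_RInt_g; auto.
Qed.


Global Instance Fpr_F : Filter Fpr.
Proof. unfold Fpr. apply _. Qed.

Lemma lim_comb {T} (F : (T -> Prop) -> Prop) {FF : Filter F} (f1 f2 f3 : T -> R) l1 l2 l3 :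
  filterlim f1 F (locally l1) -> filterlim f2 F (locally l2) -> filterlim f3 F (locally l3) ->
  filterlim (fun x => f1 x - f2 x + f3 x) F (locally (l1 - l2 + l3)).
Proof.
  intros h1 h2 h3. apply filterlim_locally. intros eps.
  assert (he : 0 < eps / 3) by (generalize (cond_pos eps); lra).
  set (e3 := mkposreal _ he).
  generalize (proj1 (filterlim_locally _ _) h1 e3) (proj1 (filterlim_locally _ _) h2 e3)
    (proj1 (filterlim_locally _ _) h3 e3). intros k1 k2 k3.
  generalize (filter_and _ _ k1 (filter_and _ _ k2 k3)). apply filter_imp.
  intros x [a1 [a2 a3]].
  change (Rabs (f1 x - l1) < eps / 3) in a1.
  change (Rabs (f2 x - l2) < eps / 3) in a2.
  change (Rabs (f3 x - l3) < eps / 3) in a3.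
  change (Rabs (f1 x - f2 x + f3 x - (l1 - l2 + l3)) < eps).
  apply Rabs_lt_between in a1. apply Rabs_lt_between in a2. apply Rabs_lt_between in a3.
  apply Rabs_def1; lra.
Qed.

Lemma V_pos_side (J : R) : filterlim (fun ab => RInt g (fst ab) (snd ab)) Fpr (locally J) ->
  is_RInt_gen V (at_right 0) (Rbar_locally p_infty) J.
Proof.
  intros HJ.
  assert (hl : filterlim (fun ab => U (snd ab) - U (fst ab) + RInt g (fst ab) (snd ab)) Fpr
     (locally (0 - 0 + J))).
  { apply (lim_comb Fpr); [ | | exact HJ].
    - apply (filterlim_comp _ _ _ snd U Fpr (Rbar_locally p_infty)). apply filterlim_snd.
      apply U_liminf.
    - apply (filterlim_comp _ _ _ fst U Fpr (at_right 0)). apply filterlim_fst.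
      apply U_lim0. }
  replace (0 - 0 + J) with J in hl by ring.
  intros P HP. unfold filtermapi.
  generalize (filter_and _ _ Fpr_pos (hl P HP)). apply filter_imp.
  intros [a b] [[ha hb] hp]. simpl in *.
  exists (U b - U a + RInt g a b). split; auto. apply is_RInt_V; auto.
Qed.

Lemma V_neg_side (J : R) : is_RInt_gen V (at_right 0) (Rbar_locally p_infty) J ->
  is_RInt_gen V (Rbar_locally m_infty) (at_left 0) J.
Proof.
  intros H P HP. destruct (H P HP) as [Q R hQ hR hQR].
  exists (fun a => R (- a)) (fun b => Q (- b)).
  - destruct hR as [M hM]. exists (- M). intros x hx. apply hM. lra.
  - destruct hQ as [e he]. exists e. intros y hy hy0. apply he.
    change (Rabs (- y - 0) < e). change (Rabs (y - 0) < e) in hy.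
    rewrite Rminus_0_r in *. rewrite Rabs_Ropp. auto. lra.
  - intros x y hx hy. destruct (hQR (- y) (- x) hy hx) as [z [hz hPz]].
    exists z. split; auto. simpl.
    apply is_RInt_swap in hz.
    apply (is_RInt_comp_opp (V := R_NormedModule)) in hz.
    apply (is_RInt_opp (V := R_NormedModule)) in hz.
    replace z with (opp (opp z)) by (unfold opp; simpl; ring).
    apply (is_RInt_ext (V := R_NormedModule) _ _ x y _ (fun s _ => eq_refl) ) in hz.
    revert hz. apply is_RInt_ext. intros s _. unfold V, opp; simpl.
    rewrite Rabs_Ropp. ring.
Qed.


Theorem mainTheorem1 :
  (forall t : R, 0 < t -> ex_series (phi_eff_term t)) /\
  exists I1 I2 : R,
    is_RInt_gen V (Rbar_locally m_infty) (at_left 0) I1 /\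
    is_RInt_gen V (at_right 0) (Rbar_locally p_infty) I2 /\
    filterlim (fun t => t ^ 2 * phi_eff t) (at_right 0) (locally ((I1 + I2) / 2)).
Proof.
  destruct g_int_exists as [J HJ].
  split.
  - intros t ht. exact (exs J HJ t ht).
  - exists J, J. split; [|split].
    + apply V_neg_side, V_pos_side; exact HJ.
    + apply V_pos_side; exact HJ.
    + replace ((J + J) / 2) with J by field. apply final_lim; exact HJ.
Qed.
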